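(* Let $n \ge 1$, let $0 < \alpha < \beta < \pi/2$, and set $\lambda = \frac{\cos\beta}{\cos\alpha}$, $\mu = \frac{\tan\alpha}{\tan\beta}$. Define $\Psi : \mathbf{R}^n \to \mathbf{R}^n$ by \[ \Psi(x_1,\dots,x_n) = \left(\lambda x_1,\dots,\lambda x_{n-1}, \lambda\mu x_n + \sqrt{(1-\lambda^2)(1-\mu^2)}\right). \] Then: (a) $\Psi$ is an affine bijection with $\Psi(B_n) \subset B_n$; (b) if $x \in E_{n,\alpha}$ then $\Psi(x) \in E_{n,\beta}$; (c) if $x,y \in E_{n,\alpha}$ then $\|\Psi(x)-\Psi(y)\| = \lambda\|x-y\|$; (d) if $x \in B_n$ satisfies $\Psi(x) \in S^{n-1}$, then $x \in E_{n,\alpha}$.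
   Context: $B_n$ is the closed Euclidean unit ball of $\mathbf{R}^n$, $S^{n-1}$ its boundary, $\|\cdot\|$ the Euclidean norm. For $\theta \in [-\pi/2,\pi/2]$, $E_{n,\theta} = \{(x_1,\dots,x_n) \in S^{n-1} : x_n = \sin\theta\}$. *)

(* Defs.v *)
From HB Require Import structures.
From mathcomp Require Import all_boot all_order all_algebra.
From mathcomp Require Import all_classical all_reals all_analysis.
Set Implicit Arguments. Unset Strict Implicit. Unset Printing Implicit Defensive.
Import Order.TTheory GRing.Theory Num.Theory.
Local Open Scope ring_scope.

(* Euclidean norm on R^n (the library norm on 'rV is the sup norm). *)
Definition enorm (R : realType) (n : nat) (x : 'rV[R]_n) : R :=
  Num.sqrt (\sum_(i < n) x ord0 i ^+ 2).

Definition ball_n (R : realType) (n : nat) : set 'rV[R]_n :=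
  [set x | enorm x <= 1].

Definition sphere_n (R : realType) (n : nat) : set 'rV[R]_n :=
  [set x | enorm x = 1].

Definition is_last (n : nat) (i : 'I_n) : bool := (val i == n.-1)%N.

(* x_n for x : R^n (n >= 1 intended) *)
Definition last_coord (R : realType) (n : nat) (x : 'rV[R]_n) : R :=
  \sum_(i < n | is_last i) x ord0 i.

Definition E_n (R : realType) (n : nat) (theta : R) : set 'rV[R]_n :=
  [set x | enorm x = 1 /\ last_coord x = sin theta].

Definition lam (R : realType) (alpha beta : R) : R := cos beta / cos alpha.
Definition mu (R : realType) (alpha beta : R) : R := tan alpha / tan beta.

Definition Psi (R : realType) (n : nat) (alpha beta : R) (x : 'rV[R]_n) : 'rV[R]_n :=
  \row_(i < n)
    (if is_last i
     then lam alpha beta * mu alpha beta * x ord0 i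
          + Num.sqrt ((1 - lam alpha beta ^+ 2) * (1 - mu alpha beta ^+ 2))
     else lam alpha beta * x ord0 i).

(* Main.v *)
Require Import Defs.
From HB Require Import structures.
From mathcomp Require Import all_boot all_order all_algebra.
From mathcomp Require Import all_classical all_reals all_analysis.
From mathcomp Require Import ring lra.
Import Order.TTheory GRing.Theory Num.Theory.
Local Open Scope ring_scope.

Local Open Scope classical_set_scope.
Set Implicit Arguments. Unset Strict Implicit.
Lemma alg (R : realType) (sa sb ca cb : R) :
  0 < sa -> sa < sb -> 0 < ca -> 0 < cb ->
  ca ^+ 2 = 1 - sa ^+ 2 -> cb ^+ 2 = 1 - sb ^+ 2 ->
  let l := cb / ca in let m := (sa / ca) / (sb / cb) in
  let c := Num.sqrt ((1 - l ^+ 2) * (1 - m ^+ 2)) in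
  let K := l ^+ 2 * (1 - m ^+ 2) in
  (0 < l /\ 0 < K /\ l * m != 0) /\ (l * m * c = K * sa /\
      c ^+ 2 = 1 - l ^+ 2 - K * sa ^+ 2 /\ l * m * sa + c = sb).
Proof.
move=> sa0 sab ca0 cb0 hca hcb l m c K.
have sb0 : 0 < sb by lra.
have sa2 : sa ^+ 2 < sb ^+ 2 by rewrite ltrXn2r // ltW.
have ha1 : 1 - sa ^+ 2 != 0 by rewrite -hca gt_eqF // exprn_gt0.
have hb1 : 1 - sb ^+ 2 != 0 by rewrite -hcb gt_eqF // exprn_gt0.
have ca0' : ca != 0 by rewrite gt_eqF.
have cb0' : cb != 0 by rewrite gt_eqF.
have sb0' : sb != 0 by rewrite gt_eqF.
have sa0' : sa != 0 by rewrite gt_eqF.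
have el2 : l ^+ 2 = (1 - sb ^+ 2) / (1 - sa ^+ 2).
  by rewrite /l expr_div_n hca hcb.
have em2 : m ^+ 2 = sa ^+ 2 * (1 - sb ^+ 2) / ((1 - sa ^+ 2) * sb ^+ 2).
  by rewrite -hca -hcb /m; field; rewrite ?mulf_neq0 ?expf_neq0 ?sa0' ?sb0' ?ca0' ?cb0' ?ha1 ?hb1.
have elm : l * m = (1 - sb ^+ 2) * sa / ((1 - sa ^+ 2) * sb).
  by rewrite -hca -hcb /l /m; field; rewrite ?mulf_neq0 ?expf_neq0 ?sa0' ?sb0' ?ca0' ?cb0' ?ha1 ?hb1.
have ec : c = (sb ^+ 2 - sa ^+ 2) / ((1 - sa ^+ 2) * sb).
  rewrite /c el2 em2.
  have -> : (1 - (1 - sb ^+ 2) / (1 - sa ^+ 2)) *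
    (1 - sa ^+ 2 * (1 - sb ^+ 2) / ((1 - sa ^+ 2) * sb ^+ 2)) =
    ((sb ^+ 2 - sa ^+ 2) / ((1 - sa ^+ 2) * sb)) ^+ 2.
    by field; rewrite ?mulf_neq0 ?expf_neq0 ?sa0' ?sb0' ?ca0' ?cb0' ?ha1 ?hb1.
  rewrite sqrtr_sqr ger0_norm // divr_ge0 ?mulr_ge0 //; try lra.
  by rewrite -hca exprn_ge0 // ltW.
have eK : K = (1 - sb ^+ 2) / (1 - sa ^+ 2) * (1 - sa ^+ 2 * (1 - sb ^+ 2) / ((1 - sa ^+ 2) * sb ^+ 2)).
  by rewrite /K el2 em2.
split; [split; [|split] | split; [|split]].
- by rewrite /l divr_gt0.
- rewrite eK.
  have -> : (1 - sb ^+ 2) / (1 - sa ^+ 2) * (1 - sa ^+ 2 * (1 - sb ^+ 2) / ((1 - sa ^+ 2) * sb ^+ 2))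
     = (1 - sb ^+ 2) * (sb ^+ 2 - sa ^+ 2) / ((1 - sa ^+ 2) ^+ 2 * sb ^+ 2).
    by field; rewrite ?mulf_neq0 ?expf_neq0 ?sa0' ?sb0' ?ca0' ?cb0' ?ha1 ?hb1.
  rewrite -hca -hcb divr_gt0 ?mulr_gt0 ?exprn_gt0 //; lra.
- rewrite elm !mulf_neq0 ?invr_neq0 ?mulf_neq0 //.
- by rewrite elm ec eK; field; rewrite ?mulf_neq0 ?expf_neq0 ?sa0' ?sb0' ?ca0' ?cb0' ?ha1 ?hb1.
- by rewrite ec eK el2; field; rewrite ?mulf_neq0 ?expf_neq0 ?sa0' ?sb0' ?ca0' ?cb0' ?ha1 ?hb1.
- by rewrite elm ec; field; rewrite ?mulf_neq0 ?expf_neq0 ?sa0' ?sb0' ?ca0' ?cb0' ?ha1 ?hb1.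
Qed.

Section Aux.
Variable R : realType.
Variable k : nat.

Lemma is_lastE (i : 'I_k.+1) : is_last i = (i == ord_max).
Proof. by rewrite /is_last -val_eqE. Qed.

Lemma sum_last (F : 'I_k.+1 -> R) : \sum_(i | is_last i) F i = F ord_max.
Proof. by rewrite (big_pred1 ord_max) // => i; exact: is_lastE. Qed.

Lemma sum_split (F : 'I_k.+1 -> R) :
  \sum_i F i = \sum_(i | ~~ is_last i) F i + F ord_max.
Proof. by rewrite (bigID [pred i : 'I_k.+1 | is_last i]) /= sum_last addrC. Qed.

Definition Sx (x : 'rV[R]_k.+1) := \sum_(i | ~~ is_last i) x ord0 i ^+ 2.

Lemma Sx_ge0 x : 0 <= Sx x.
Proof. by apply: sumr_ge0 => i _; exact: sqr_ge0. Qed.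

Lemma enorm_eq1 x : (enorm x = 1) <-> (Sx x + x ord0 ord_max ^+ 2 = 1).
Proof.
rewrite /enorm sum_split -/(Sx x).
have h0 : 0 <= Sx x + x ord0 ord_max ^+ 2 by rewrite addr_ge0 ?Sx_ge0 ?sqr_ge0.
split => [h|->]; last exact: sqrtr1.
by rewrite -(sqr_sqrtr h0) h expr1n.
Qed.

Lemma enorm_le1 x : (enorm x <= 1) = (Sx x + x ord0 ord_max ^+ 2 <= 1).
Proof.
by rewrite /enorm sum_split -/(Sx x) -[X in _ <= X]sqrtr1 ler_sqrt.
Qed.

Lemma last_coordE (x : 'rV[R]_k.+1) : last_coord x = x ord0 ord_max.
Proof. by rewrite /last_coord sum_last. Qed.

End Aux.

Lemma alg' (R : realType) (sa sb ca cb l m c K : R) :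
  0 < sa -> sa < sb -> 0 < ca -> 0 < cb ->
  ca ^+ 2 = 1 - sa ^+ 2 -> cb ^+ 2 = 1 - sb ^+ 2 ->
  l = cb / ca -> m = (sa / ca) / (sb / cb) ->
  c = Num.sqrt ((1 - l ^+ 2) * (1 - m ^+ 2)) ->
  K = l ^+ 2 * (1 - m ^+ 2) ->
  (0 < l /\ 0 < K /\ l * m != 0) /\ (l * m * c = K * sa /\
      c ^+ 2 = 1 - l ^+ 2 - K * sa ^+ 2 /\ l * m * sa + c = sb).
Proof.
move=> ? ? ? ? ? ? hl hm hc hK; subst l m c K; exact: alg.
Qed.

Arguments alg' {R sa sb ca cb l m c K}.

Theorem lemma6 (R : realType) (n : nat) (alpha beta : R)
  (hn : (1 <= n)%N) (ha : 0 < alpha) (hab : alpha < beta) (hb : beta < pi / 2) :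
  [/\ ((exists (A : 'M[R]_n) (b : 'rV[R]_n), forall x, Psi alpha beta x = x *m A + b)
       /\ bijective (Psi alpha beta : 'rV[R]_n -> 'rV[R]_n)
       /\ Psi alpha beta @` (@ball_n R n) `<=` (@ball_n R n)),
      (forall x, @E_n R n alpha x -> @E_n R n beta (Psi alpha beta x)),
      (forall x y, @E_n R n alpha x -> @E_n R n alpha y ->
         enorm (Psi alpha beta x - Psi alpha beta y) = lam alpha beta * enorm (x - y))
    & (forall x, (@ball_n R n) x -> (@sphere_n R n) (Psi alpha beta x) -> @E_n R n alpha x)].
Proof.
case: n hn => // k _.
have pi0 := pi_gt0 R.
have sa0 : 0 < sin alpha by apply: sin_gt0_pihalf; apply/andP; split => //; lra.
have sab : sin alpha < sin beta.
  by rewrite ltr_sin // in_itv /=; apply/andP; split; lra.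
have ca0 : 0 < cos alpha by apply: cos_gt0_pihalf; apply/andP; split; lra.
have cb0 : 0 < cos beta by apply: cos_gt0_pihalf; apply/andP; split; lra.
set l := lam alpha beta; set m := mu alpha beta.
set c := Num.sqrt ((1 - l ^+ 2) * (1 - m ^+ 2)).
set K := l ^+ 2 * (1 - m ^+ 2).
have [[l0 [K0 lm0]] [h1 [h2 h3]]] := alg' sa0 sab ca0 cb0 (cos2sin2 _) (cos2sin2 _)
   (erefl l) (erefl m) (erefl c) (erefl K).
set sa := sin alpha in sa0 sab h1 h2 h3 *.
have E : forall S t, l ^+ 2 * S + (l * m * t + c) ^+ 2 =
                     l ^+ 2 * (S + t ^+ 2 - 1) + 1 - K * (t - sa) ^+ 2.
  move=> S t.
  have -> : l ^+ 2 * S + (l * m * t + c) ^+ 2 =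
    l ^+ 2 * S + l ^+ 2 * m ^+ 2 * t ^+ 2 + 2 * (l * m * c) * t + c ^+ 2 by ring.
  by rewrite h1 h2 /K; ring.
have PsiE : forall x (i : 'I_k.+1), Psi alpha beta x ord0 i =
   if is_last i then l * m * x ord0 i + c else l * x ord0 i.
  by move=> x i; rewrite mxE.
have PsiM : forall x : 'rV[R]_k.+1, Psi alpha beta x ord0 ord_max = l * m * x ord0 ord_max + c.
  by move=> x; rewrite PsiE is_lastE eqxx.
have SxP : forall x : 'rV[R]_k.+1, Sx (Psi alpha beta x) = l ^+ 2 * Sx x.
  move=> x; rewrite /Sx mulr_sumr; apply: eq_bigr => i /negbTE h.
  by rewrite PsiE h exprMn.
have normP : forall x : 'rV[R]_k.+1, Sx (Psi alpha beta x) + Psi alpha beta x ord0 ord_max ^+ 2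
   = l ^+ 2 * (Sx x + x ord0 ord_max ^+ 2 - 1) + 1 - K * (x ord0 ord_max - sa) ^+ 2.
  by move=> x; rewrite SxP PsiM E.
have hl0 : l != 0 by rewrite gt_eqF.
have hm0 : m != 0 by move: lm0; rewrite mulf_eq0 negb_or => /andP[].
have o0 : (0 : 'I_1) = ord0 by [].
split.
- split.
    exists (diag_mx (\row_i (if is_last i then l * m else l))).
    exists (\row_i (if is_last i then c else 0)) => x.
    apply/rowP => j; rewrite mul_mx_diag !mxE.
    by case: (is_last j) => /=; rewrite ?addr0; [congr (_ + _)|]; exact: mulrC.
  split.
    exists (fun y : 'rV[R]_k.+1 =>
      \row_i (if is_last i then (y ord0 i - c) / (l * m) else y ord0 i / l)).
      move=> x; apply/rowP => j; rewrite mxE PsiE o0.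
      by case: (is_last j) => /=; field; rewrite ?hl0 ?hm0.
    move=> y; apply/rowP => j; rewrite o0 PsiE mxE.
    by case: (is_last j) => /=; field; rewrite ?hl0 ?hm0.
  move=> _ [x hx <-]; move: hx; rewrite /ball_n /= !enorm_le1 normP => hx.
  have : 0 <= K * (x ord0 ord_max - sa) ^+ 2 by rewrite mulr_ge0 ?sqr_ge0 // ltW.
  have : l ^+ 2 * (Sx x + x ord0 ord_max ^+ 2 - 1) <= 0.
    by rewrite mulr_ge0_le0 ?sqr_ge0 //; lra.
  lra.
- move=> x [/enorm_eq1 hx]; rewrite last_coordE => ht; split.
    by apply/enorm_eq1; rewrite normP hx ht subrr /sa subrr expr0n /= !mulr0 add0r subr0.
  by rewrite last_coordE PsiM ht.
- move=> x y [_]; rewrite last_coordE => hx [_]; rewrite last_coordE => hy.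
  have -> : Psi alpha beta x - Psi alpha beta y = l *: (x - y).
    apply/rowP => j; rewrite o0 !mxE.
    rewrite -/l -/m -/c; case hj: (is_last j) => /=; last by ring.
    move: hj; rewrite is_lastE => /eqP ->; rewrite hx hy; ring.
  rewrite /enorm.
  have -> : \sum_(i < k.+1) (l *: (x - y)) ord0 i ^+ 2 = l ^+ 2 * \sum_(i < k.+1) (x - y) ord0 i ^+ 2.
    by rewrite mulr_sumr; apply: eq_bigr => i _; rewrite mxE exprMn.
  by rewrite sqrtrM ?sqr_ge0 // sqrtr_sqr ger0_norm // ltW.
- move=> x; rewrite /ball_n /sphere_n /= enorm_le1 => hx /enorm_eq1; rewrite normP => h.
  have u0 : 0 <= l ^+ 2 * (1 - (Sx x + x ord0 ord_max ^+ 2)).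
    by rewrite mulr_ge0 ?sqr_ge0 //; lra.
  have v0 : 0 <= K * (x ord0 ord_max - sa) ^+ 2 by rewrite mulr_ge0 ?sqr_ge0 // ltW.
  have hu : l ^+ 2 * (1 - (Sx x + x ord0 ord_max ^+ 2)) = 0 by lra.
  have hv : K * (x ord0 ord_max - sa) ^+ 2 = 0 by lra.
  move: hu hv => /eqP; rewrite mulf_eq0 sqrf_eq0 gt_eqF //= subr_eq0 => /eqP hs.
  move=> /eqP; rewrite mulf_eq0 sqrf_eq0 gt_eqF //= subr_eq0 => /eqP ht.
  split; first by apply/enorm_eq1.
  by rewrite last_coordE.
Qed.
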